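(* Let $\delta\geq 6$ be an integer of the form $\delta=4k+2$ with $k$ a positive integer. Then there does not exist a positive odd integer $n$ with the property that there exist positive integers $d_1, d_2$, each dividing $\frac{n^2+1}{2}$, such that $d_1+d_2=\delta n$. *)

(* Defs.v *)
From mathcomp Require Import all_boot.

(* Main.v *)
From mathcomp Require Import all_boot.
From mathcomp Require Import zify.
Lemma vieta (E C : nat) : 4 <= E -> 2 * E <= C ->
  forall s a b, a + b <= s -> 0 < a -> 0 < b -> (a + b)^2 + E = C * a * b -> E + 4 = C.
Proof.
move=> hE hC; elim=> [|s IH] a b hs ha hb heq; first by lia.
wlog hab : a b hs ha hb heq / b <= a.
  move=> W; case: (leqP b a) => h; first exact: (W a b).
  apply: (W b a) => //; try lia.
case: (ltnP b a) => hlt; last first.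
  have eab : a = b by lia.
  subst a.
  have h1 : b = 1 by nia.
  subst b; lia.
set a' := C * b - 2 * b - a.
have hkey : a * a' = b ^ 2 + E.
  rewrite /a'. nia.
case: (ltnP a' a) => ha'.
  apply: (IH a' b); [lia | nia | done | rewrite /a'; nia].
exfalso. nia.
Qed.

Theorem theorem3 (k : nat) (hk : 0 < k) :
  ~ exists n : nat, [/\ 0 < n, odd n &
      exists d1 d2 : nat, [/\ 0 < d1, 0 < d2,
        d1 %| (n ^ 2 + 1) %/ 2, d2 %| (n ^ 2 + 1) %/ 2 &
        d1 + d2 = (4 * k + 2) * n]].
Proof.
case=> n [n0 nodd [d1 [d2 [h1 h2 hd1 hd2 hsum]]]].
have [j nj] : exists j, n = 2 * j + 1.
  exists n./2; move: (odd_double_half n); rewrite nodd -muln2; lia.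
have eN : (n ^ 2 + 1) %/ 2 = 2 * (j * j + j) + 1.
  have -> : n ^ 2 + 1 = (2 * (j * j + j) + 1) * 2 by rewrite nj; nia.
  by rewrite mulnK.
rewrite eN in hd1 hd2.
set N := 2 * (j * j + j) + 1 in hd1 hd2.
set g := gcdn d1 d2.
have g0 : 0 < g by rewrite gcdn_gt0 h1.
have [a ea] := dvdnP (dvdn_gcdl d1 d2).
have [b eb] := dvdnP (dvdn_gcdr d1 d2).
rewrite -/g in ea eb.
have [m em] : exists m, N = m * lcmn d1 d2 by apply/dvdnP; rewrite dvdn_lcm hd1 hd2.
have el : lcmn d1 d2 = a * b * g.
  apply/eqP; rewrite -(eqn_pmul2r g0) muln_lcm_gcd; apply/eqP.
  rewrite {1}ea {1}eb; nia.
rewrite el in em.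
have gN : g %| N by rewrite em; apply: dvdn_mull; apply: dvdn_mull.
have cop : coprime g n.
  rewrite /coprime -dvdn1.
  have hgn : gcdn g n %| N := dvdn_trans (dvdn_gcdl g n) gN.
  have hn : gcdn g n %| n * n := dvdn_mulr n (dvdn_gcdr g n).
  have h2N : gcdn g n %| n * n + 1.
    have -> : n * n + 1 = 2 * N by rewrite /N nj; nia.
    exact: dvdn_mull.
  by rewrite -(dvdn_addr 1 hn).
have gd : g %| 4 * k + 2.
  rewrite -(Gauss_dvdl _ cop) -hsum ea eb -mulnDl; exact: dvdn_mull.
have [e ee] := dvdnP gd.
have godd : odd g.
  apply: (dvdn_odd gN); rewrite /N oddD oddM; done.
have e2 : 2 <= e.
  case: e ee => [|[|e]] ee //; [lia|].
  move: (congr1 odd ee); rewrite mul1n oddD oddM godd /=; done.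
have hen : e * n = a + b.
  apply/eqP; rewrite -(eqn_pmul2r g0); apply/eqP.
  by rewrite mulnDl -ea -eb hsum ee; nia.
have a0 : 0 < a by move: h1; rewrite ea; case: a {ea hen el em}.
have b0 : 0 < b by move: h2; rewrite eb; case: b {eb hen el em}.
have hkey : (a + b) ^ 2 + e ^ 2 = (2 * (e ^ 2) * (g * m)) * a * b.
  rewrite -hen.
  have hn2 : n * n + 1 = 2 * N by rewrite /N nj; nia.
  have -> : (e * n) ^ 2 + e ^ 2 = e ^ 2 * (n * n + 1).
    by rewrite mulnDr muln1 expnMn mulnn.
  rewrite hn2 em.
  move: (e ^ 2) => E; clear.
  nia.
have m0 : 0 < m by move: em; case: (m) => [|m'] //; rewrite /N; lia.
have e4 : 4 <= e ^ 2 by rewrite (_ : 4 = 2 ^ 2) // leq_exp2r.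
have K1 : 1 <= g * m by rewrite muln_gt0 g0 m0.
have hC : 2 * e ^ 2 <= 2 * e ^ 2 * (g * m) by rewrite leq_pmulr.
have := vieta _ _ e4 hC (a + b) a b (leqnn _) a0 b0 hkey.
move=> hE.
have K1' : g * m = 1.
  move: hC hE; move: (g * m) K1 => K K1; move: (e ^ 2) e4 => E e4 _ hE.
  case: K K1 hE => [|[|K]] // _ hE.
  have : 2 * E * K.+2 >= 2 * E * 2 by apply: leq_mul.
  lia.
have g1 : g = 1 by move/eqP: K1'; rewrite muln_eq1 => /andP[/eqP].
rewrite K1' g1 muln1 in hE ee.
have : e ^ 2 = 4 by lia.
move=> hx.
have e22 : e = 2.
  move: e2 hx; clear; case: e => [|[|[|e]]] //; rewrite !expnS; nia.
move: ee hk; rewrite e22; lia.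
Qed.
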